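(* Let $\mathcal U\subseteq M(\mathbb C)^g$ and $\mathcal V\subseteq M(\mathbb C)^{\tilde g}$ be non-commutative domains. If $f:\mathcal U\to\mathcal V$ is a proper analytic free map and $X\in\mathcal U(n)$, then the derivative $f'(X)=f[n]'(X):M_n(\mathbb C)^g\to M_n(\mathbb C)^{\tilde g}$ is one-to-one. In particular, if $g=\tilde g$, then $f'(X)$ is a vector space isomorphism.
   Context: $M_n(\mathbb C)^g$ denotes $g$-tuples of $n\times n$ complex matrices; products with matrices, unitary conjugation and direct sums of tuples are taken entrywise (direct sums block diagonally). A non-commutative set $\mathcal U\subseteq M(\mathbb C)^g$ is a sequence $(\mathcal U(n))_n$, $\mathcal U(n)\subseteq M_n(\mathbb C)^g$, closed under simultaneous unitary similarity $X\mapsto U^*XU$ and under direct sums; it is a non-commutative domain if each $\mathcal U(n)$ is open and connected. A free map $f:\mathcal U\to\mathcal V$ is a sequence of functions $f[n]:\mathcal U(n)\to\mathcal V(n)$ such that whenever $X\in\mathcal U(n)$, $Y\in\mathcal U(m)$, $\Gamma\in\mathbb C^{n\times m}$ with $X\Gamma=\Gamma Y$, then $f[n](X)\Gamma=\Gamma f[m](Y)$. It is an analytic free map if each $f[n]$ is holomorphic, and proper if each $f[n]:\mathcal U(n)\to\mathcal V(n)$ is proper (preimages of compact sets are compact). *)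

(* Defs.v *)
From HB Require Import structures.
From mathcomp Require Import all_boot all_order all_algebra.
From mathcomp Require Import complex.
From mathcomp Require Import all_classical all_reals all_analysis.
Set Implicit Arguments. Unset Strict Implicit. Unset Printing Implicit Defensive.
Import Order.TTheory GRing.Theory Num.Theory.
Import numFieldNormedType.Exports.
Local Open Scope ring_scope.
Local Open Scope classical_set_scope.
Local Open Scope complex_scope.

Definition CC (R : realType) : numFieldType := R[i].

(* A g-tuple of n x n complex matrices X = (X_1, ..., X_g) is encoded as the
   g x (n*n) matrix whose i-th row is mxvec X_i.  This is a C-linear
   isometric (for the max norms) identification M_n(C)^g ~ 'M[C]_(g, n*n),
   so it carries the right normed C-vector-space structure. *)
Definition mtuple (R : realType) (g n : nat) := 'M[CC R]_(g, n * n).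

Definition tcomp (R : realType) (g n : nat) (X : mtuple R g n) (i : 'I_g)
  : 'M[CC R]_n := vec_mx (row i X).

Definition tmk (R : realType) (g n : nat) (F : 'I_g -> 'M[CC R]_n)
  : mtuple R g n := \matrix_(i < g) mxvec (F i).

Definition adjmx (R : realType) (n : nat) (U : 'M[CC R]_n) : 'M[CC R]_n :=
  (map_mx (@conjc R) U)^T.
Definition unitary (R : realType) (n : nat) (U : 'M[CC R]_n) : Prop :=
  U *m adjmx U = 1%:M.

Definition tconj (R : realType) (g n : nat) (U : 'M[CC R]_n) (X : mtuple R g n)
  : mtuple R g n := tmk (fun i => adjmx U *m tcomp X i *m U).

Definition tdsum (R : realType) (g n m : nat) (X : mtuple R g n)
  (Y : mtuple R g m) : mtuple R g (n + m) :=
  tmk (fun i => block_mx (tcomp X i) 0 0 (tcomp Y i)).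

Definition intertwines (R : realType) (g n m : nat) (X : mtuple R g n)
  (Gam : 'M[CC R]_(n, m)) (Y : mtuple R g m) : Prop :=
  forall i : 'I_g, tcomp X i *m Gam = Gam *m tcomp Y i.

Definition nc_set (R : realType) (g : nat) (U : forall n, set (mtuple R g n))
  : Prop :=
  (forall n (V : 'M[CC R]_n) (X : mtuple R g n),
      unitary V -> U n X -> U n (tconj V X)) /\
  (forall n m (X : mtuple R g n) (Y : mtuple R g m),
      U n X -> U m Y -> U (n + m)%N (tdsum X Y)).

Definition nc_domain (R : realType) (g : nat) (U : forall n, set (mtuple R g n))
  : Prop :=
  nc_set U /\ (forall n, open (U n) /\ connected (U n)).

Definition free_map (R : realType) (g g' : nat)
  (U : forall n, set (mtuple R g n)) (V : forall n, set (mtuple R g' n))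
  (f : forall n, mtuple R g n -> mtuple R g' n) : Prop :=
  (forall n X, U n X -> V n (f n X)) /\
  (forall n m (X : mtuple R g n) (Y : mtuple R g m) (Gam : 'M[CC R]_(n, m)),
      U n X -> U m Y -> intertwines X Gam Y ->
      intertwines (f n X) Gam (f m Y)).

(* analytic: each f[n] is holomorphic on U(n), i.e. complex (Frechet)
   differentiable over C at every point of U(n) *)
Definition analytic_free_map (R : realType) (g g' : nat)
  (U : forall n, set (mtuple R g n)) (V : forall n, set (mtuple R g' n))
  (f : forall n, mtuple R g n -> mtuple R g' n) : Prop :=
  free_map U V f /\ (forall n X, U n X -> differentiable (f n) X).

Definition proper_free_map (R : realType) (g g' : nat)
  (U : forall n, set (mtuple R g n)) (V : forall n, set (mtuple R g' n))
  (f : forall n, mtuple R g n -> mtuple R g' n) : Prop :=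
  forall n (K : set (mtuple R g' n)), compact K -> K `<=` V n ->
    compact (U n `&` (f n @^-1` K)).

(* Main.v *)
Require Import Defs.
From HB Require Import structures.
From mathcomp Require Import all_boot all_order all_algebra.
From mathcomp Require Import complex.
From mathcomp Require Import all_classical all_reals all_analysis.
Import Order.TTheory GRing.Theory Num.Theory Num.Def.
Import numFieldNormedType.Exports.
Local Open Scope ring_scope.
Local Open Scope classical_set_scope.

Set Implicit Arguments. Unset Strict Implicit. Unset Printing Implicit Defensive.


Section Alg.
Variable R : realType.
Local Notation K := (CC R).

Lemma tcomp_tmk g n (F : 'I_g -> 'M[K]_n) i : tcomp (tmk F) i = F i.
Proof. by rewrite /tcomp /tmk rowK mxvecK. Qed.

Lemma tuple_ext g n (P Q : mtuple R g n) :
  (forall i, tcomp P i = tcomp Q i) -> P = Q.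
Proof.
move=> h; apply/row_matrixP => i.
by rewrite -[row i P]vec_mxK -[row i Q]vec_mxK; have := h i; rewrite /tcomp => ->.
Qed.

Lemma tcompD g n (P Q : mtuple R g n) i : tcomp (P + Q) i = tcomp P i + tcomp Q i.
Proof. by rewrite /tcomp !linearD. Qed.

Lemma tcompZ g n (a : K) (P : mtuple R g n) i : tcomp (a *: P) i = a *: tcomp P i.
Proof. by rewrite /tcomp !linearZ. Qed.

Lemma tcomp0 g n i : tcomp (0 : mtuple R g n) i = 0.
Proof. by rewrite /tcomp !linear0. Qed.

Definition Wmk g n (A C B : mtuple R g n) : mtuple R g (n + n) :=
  tmk (fun i => block_mx (tcomp A i) (tcomp C i) 0 (tcomp B i)).

Lemma Wmk0 g n (A B : mtuple R g n) : Wmk A 0 B = tdsum A B.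
Proof. by rewrite /Wmk /tdsum; congr tmk; apply: funext => i; rewrite tcomp0. Qed.

Definition Lur g n (P : mtuple R g (n + n)) : mtuple R g n :=
  tmk (fun i => ursubmx (tcomp P i)).

Lemma BL g g' U V (f : forall n, mtuple R g n -> mtuple R g' n) n (A C B : mtuple R g n) :
  free_map U V f -> U n A -> U n B -> U (n+n)%N (Wmk A C B) ->
  forall i, tcomp (f _ (Wmk A C B)) i =
   block_mx (tcomp (f n A) i) (ursubmx (tcomp (f _ (Wmk A C B)) i)) 0 (tcomp (f n B) i).
Proof.
move=> [_ fI] UA UB UW i.
set P := tcomp (f _ (Wmk A C B)) i.
have h1 : intertwines (Wmk A C B) (col_mx 1%:M 0) A.
  move=> j; rewrite tcomp_tmk mul_block_col mul_col_mx.
  by rewrite !mulmx1 !mulmx0 mul1mx mul0mx addr0 add0r.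
have h2 : intertwines B (row_mx 0 1%:M) (Wmk A C B).
  move=> j; rewrite tcomp_tmk mul_row_block mul_mx_row.
  by rewrite ?mulmx1 ?mulmx0 ?mul1mx ?mul0mx ?addr0 ?add0r.
have := fI _ _ _ _ _ UW UA h1 i; have := fI _ _ _ _ _ UB UW h2 i.
rewrite -/P -[P]submxK mul_block_col mul_col_mx mul_row_block mul_mx_row.
rewrite ?mulmx1 ?mulmx0 ?mul1mx ?mul0mx ?addr0 ?add0r.
move=> /eq_row_mx [e1 e2] /eq_col_mx [e3 e4].
by rewrite block_mxKur e2 e3 e4.
Qed.

Lemma tcompB g n (P Q : mtuple R g n) i : tcomp (P - Q) i = tcomp P i - tcomp Q i.
Proof. by rewrite /tcomp !linearB. Qed.

Lemma DQ g g' U V (f : forall n, mtuple R g n -> mtuple R g' n) n (X H : mtuple R g n) (t : K) :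
  free_map U V f -> t != 0 -> U n X -> U n (t *: H + X) ->
  U (n+n)%N (Wmk (t *: H + X) 0 X) -> U (n+n)%N (Wmk (t *: H + X) H X) ->
  Lur (f _ (Wmk (t *: H + X) H X)) = t^-1 *: (f n (t *: H + X) - f n X).
Proof.
move=> fF t0 UX UA UQ UP; have [_ fI] := fF.
set A := t *: H + X.
apply: tuple_ext => i; rewrite tcomp_tmk tcompZ tcompB.
have eQ := BL fF UA UX UQ i; have eP := BL fF UA UX UP i.
have h3 : intertwines A (row_mx 1%:M 0) (Wmk A 0 X).
  move=> j; rewrite tcomp_tmk mul_row_block mul_mx_row tcomp0.
  by rewrite ?mulmx1 ?mulmx0 ?mul1mx ?mul0mx ?addr0 ?add0r.
have uQ : ursubmx (tcomp (f _ (Wmk A 0 X)) i) = 0.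
  have := fI _ _ _ _ _ UA UQ h3 i; rewrite eQ mul_row_block mul_mx_row.
  rewrite ?mulmx1 ?mulmx0 ?mul1mx ?mul0mx ?addr0 ?add0r.
  by rewrite block_mxKur => /eq_row_mx [_ <-].
have hS : intertwines (Wmk A 0 X) (block_mx 1%:M (t^-1)%:M 0 1%:M) (Wmk A H X).
  move=> j; rewrite !tcomp_tmk !mulmx_block tcomp0.
  rewrite ?mulmx1 ?mulmx0 ?mul1mx ?mul0mx ?addr0 ?add0r mul_mx_scalar mul_scalar_mx.
  rewrite /A tcompD tcompZ scalerDr scalerA mulVf //.
  by rewrite scale1r.
have := fI _ _ _ _ _ UQ UP hS i.
rewrite eQ uQ [tcomp (f _ (Wmk A H X)) i]eP !mulmx_block.
rewrite ?mulmx1 ?mulmx0 ?mul1mx ?mul0mx ?addr0 ?add0r mul_mx_scalar mul_scalar_mx.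
move=> /eq_block_mx [_ e _ _].
by rewrite block_mxKur /A scalerBr e addrK.
Qed.

End Alg.


Section An.
Variable R : realType.
Local Notation K := (CC R).

Lemma entry_le_norm m p (M : 'M[K]_(m,p)) i j : `|M i j| <= `|M|.
Proof.
change (`|M i j| <= mx_norm M); rewrite mx_normE.
have := le_bigmax 0%:nng (fun k : 'I_m * 'I_p => `|M k.1 k.2|%:nng) (i, j).
move=> h.
change ((`|M i j|%:nng)%:num <= (\big[maxr/0%:nng]_k `|M k.1 k.2|%:nng)%:num).
by rewrite num_le.
Qed.

Lemma norm_le_sel m p m' p' (Q : 'M[K]_(m,p)) (P : 'M[K]_(m',p')) :
  (forall i j, exists i' j', Q i j = P i' j') -> `|Q| <= `|P|.
Proof.
move=> h; change (mx_norm Q <= `|P|); rewrite mx_normE.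
change ((\big[maxr/0%:nng]_k `|Q k.1 k.2|%:nng)%:num <= (`|P|%:nng)%:num).
rewrite num_le; apply/bigmax_leP; split=> [|[i j] _ /=].
  by rewrite -num_le /=.
rewrite -num_le /=; have [i' [j' ->]] := h i j; exact: entry_le_norm.
Qed.
Lemma Lur_sel g n (P : mtuple R g (n+n)) a k : exists a' k', Lur P a k = P a' k'.
Proof.
case/mxvec_indexP: k => x y; exists a, (mxvec_index (lshift n x) (rshift n y)).
by rewrite /Lur /tmk /tcomp !mxE mxvecE !mxE.
Qed.

Lemma LurB g n (P Q : mtuple R g (n+n)) : Lur (P - Q) = Lur P - Lur Q.
Proof. by apply: tuple_ext => i; rewrite tcompB !tcomp_tmk tcompB; apply/matrixP => x y; rewrite !mxE. Qed.

Lemma Lur_cont g n (P : 'M[K]_(g,(n+n)*(n+n))) : (@Lur R g n) x @[x --> P] --> Lur P.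
Proof.
apply/(@cvgrPdist_lt K _ _ (nbhs P) (nbhs_filter P)) => e e0.
near=> Q. rewrite -LurB. apply: le_lt_trans (norm_le_sel (@Lur_sel _ _ _)) _.
near: Q. apply: (@cvgr_dist_lt K _ _ (nbhs P) (nbhs_filter P)) => //.
Unshelve. all: by end_near. Qed.
End An.


Section D.
Variable R : realType.
Local Notation K := (CC R).

Lemma Wlin g n (X H : mtuple R g n) (t : K) :
  Wmk (t *: H + X) H X = t *: Wmk H 0 0 + Wmk X H X.
Proof.
apply: tuple_ext => i; rewrite tcompD tcompZ !tcomp_tmk tcompD tcompZ !tcomp0.
by rewrite scale_block_mx add_block_mx !scaler0 ?add0r ?addr0.
Qed.

Lemma affine_cvg m p (E W : 'M[K]_(m, p)) :
  (fun t : K => t *: E + W) @ (0 : K)^' --> W.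
Proof.
apply: cvg_within_filter.
have h : (fun t : K => t *: E + W) @ (0 : K) --> 0 *: E + W.
  apply: (@cvgD K _ _ (nbhs (0:K)) (nbhs_filter _)); last exact: cvg_cst.
  apply: (@cvgZr_tmp K _ _ (nbhs (0:K)) (nbhs_filter _)).
  exact: (@cvg_id _ (nbhs (0:K))).
by rewrite scale0r add0r in h.
Qed.
Lemma DL g g' U V (f : forall n, mtuple R g n -> mtuple R g' n) n (X H : mtuple R g n) :
  free_map U V f -> open (U n) -> 
  differentiable (f n) X -> {for Wmk X H X, continuous (f (n+n)%N)} ->
  U n X -> U (n+n)%N (Wmk X H X) -> open (U (n+n)%N) ->
  (forall A, U n A -> U (n+n)%N (Wmk A 0 X)) ->
  Lur (f _ (Wmk X H X)) = 'd (f n) X H.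
Proof.
move=> fF UO fD fc UX UW UO2 Ud.
set W1 := Wmk X H X.
have c2 : (fun t : K => t^-1 *: (f n (t *: H + X) - f n X)) @ (0:K)^' --> 'd (f n) X H.
  have c := @diff_derivable _ _ _ (f n) X H fD.
  rewrite -(deriveE H fD); exact: c.
have cT : (fun t : K => Wmk (t *: H + X) H X) @ (0:K)^' --> W1.
  have -> : (fun t : K => Wmk (t *: H + X) H X) = (fun t => t *: Wmk H 0 0 + W1).
    by apply: funext => t; exact: Wlin.
  exact: affine_cvg.
have cA : (fun t : K => t *: H + X) @ (0:K)^' --> X by exact: affine_cvg.
have c1 : (fun t : K => Lur (f _ (Wmk (t *: H + X) H X))) @ (0:K)^' --> Lur (f _ W1).
  apply: (cvg_comp _ _ (cvg_comp _ _ cT fc)).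
  exact: Lur_cont.
have ev1 : \forall t \near (0:K)^', U n (t *: H + X).
  exact: (cA _ (open_nbhs_nbhs (conj UO UX))).
have ev2 : \forall t \near (0:K)^', U (n+n)%N (Wmk (t *: H + X) H X).
  exact: (cT _ (open_nbhs_nbhs (conj UO2 UW))).
have ev0 : \forall t \near (0:K)^', t != 0 by exact: nbhs_dnbhs_neq.
have c2' : (fun t : K => t^-1 *: (f n (t *: H + X) - f n X)) @ (0:K)^' --> Lur (f _ W1).
  apply: cvg_trans c1; apply: near_eq_cvg.
  near=> t; apply: (DQ fF) => //.
  - by near: t.
  - by near: t.
  - by apply: Ud; near: t.
  - by near: t.
have e1 := cvg_lim (@norm_hausdorff _ _) c2.
have e2 := cvg_lim (@norm_hausdorff _ _) c2'.
by rewrite -e1 -e2.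
Unshelve. all: by end_near.
Qed.
End D.


Section M.
Variable R : realType.
Local Notation K := (CC R).

Lemma normC_real (x : R) : `|(x%:C)%C : K| = (`|x|%:C)%C.
Proof.
rewrite normc_def /=. congr (_%:C)%C.
by rewrite expr0n /= addr0 sqrtr_sqr.
Qed.

Lemma realC_sub (x y : R) : ((x%:C)%C : K) - (y%:C)%C = ((x - y)%:C)%C.
Proof. by apply/eqP; rewrite eq_complex /= subr0 !eqxx. Qed.

Lemma realC_cont (r : R) : (fun x : R => ((x%:C)%C : K)) @ r --> ((r%:C)%C : K).
Proof.
apply/(@cvgrPdist_lt K _ _ (nbhs r) (nbhs_filter r)) => e e0.
move: (e0); rewrite ltcE => /andP[/eqP eI eR].
have eE : e = ((complex.Re e)%:C)%C by case: e eI {e0 eR} => a b /= ->.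
have := @cvgr_dist_lt _ _ _ (nbhs r) (nbhs_filter r) id r (@cvg_id _ (nbhs r)) _ eR.
apply: filterS => t ht.
by rewrite realC_sub normC_real [X in _ < X]eE ltcR.
Qed.
Lemma norm_realC m p (x : 'M[K]_(m,p)) : ((complex.Re `|x|)%:C)%C = `|x|.
Proof. by apply: RRe_real; exact: normr_real. Qed.

Lemma compact_bnd m p (A : set 'M[K]_(m,p)) : compact A ->
  exists N : nat, forall x, A x -> `|x| < (((N%:R : R))%:C)%C.
Proof.
rewrite compact_cover => Aco.
pose O (k : nat) := [set x : 'M[K]_(m,p) | `|x| < (((k%:R : R))%:C)%C].
have covA : A `<=` \bigcup_(k in [set: nat]) O k.
  move=> x _; exists (truncn (complex.Re `|x|)).+1 => //.
  by rewrite /O /= -norm_realC ltcR truncnS_gt.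
have /Aco [] := covA.
  move=> k _; rewrite openE => x; rewrite /O /= -subr_gt0 => ltpn.
  apply/nbhs_ballP; exists ((((k%:R : R))%:C)%C - `|x|) => // q.
  rewrite -ball_normE /= ltrBrDr distrC; apply: le_lt_trans.
  by rewrite -{1}(subrK x q) ler_normD.
move=> D _ DcovA.
exists (\max_(i <- finmap.enum_fset D) i)%N => x /DcovA [k Dk Ok].
apply: (lt_le_trans Ok); rewrite lecR ler_nat.
exact: (@leq_bigmax_seq _ (finmap.enum_fset D) xpredT id k Dk).
Qed.
End M.


Section F.
Variable R : realType.
Local Notation K := (CC R).

Lemma affine_cont m p (E W : 'M[K]_(m, p)) (s : K) :
  (fun t : K => t *: E + W) @ s --> s *: E + W.
Proof.
apply: (@cvgD K _ _ (nbhs s) (nbhs_filter _)); last exact: cvg_cst.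
apply: (@cvgZr_tmp K _ _ (nbhs s) (nbhs_filter _)).
exact: (@cvg_id _ (nbhs s)).
Qed.

Lemma Wl_lin g n (X H : mtuple R g n) (s : K) :
  Wmk X (s *: H) X = s *: Wmk 0 H 0 + Wmk X 0 X.
Proof.
apply: tuple_ext => i; rewrite tcompD tcompZ !tcomp_tmk tcompZ !tcomp0.
by rewrite scale_block_mx add_block_mx !scaler0 ?add0r ?addr0.
Qed.

Lemma Wl_entry g n (X H : mtuple R g n) (s : K) i a b :
  Wmk X (s *: H) X i (mxvec_index (lshift n a) (rshift n b)) = s * H i (mxvec_index a b).
Proof. by rewrite /Wmk /tmk mxE mxvecE block_mxEur /tcomp !mxE. Qed.

Lemma connectedR : connected [set: R].
Proof. by apply/connected_intervalP => x y _ _ z _. Qed.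

Lemma ker_triv g g' U V (f : forall n, mtuple R g n -> mtuple R g' n) n (X H : mtuple R g n) :
  nc_domain U -> nc_domain V -> analytic_free_map U V f -> proper_free_map U V f ->
  U n X -> 'd (f n) X H = 0 -> H = 0.
Proof.
move=> [[ncU dsU] topU] _ [fF fD] fP UX hH.
have [//|Hn] := eqVneq H 0; exfalso.
pose Wl (s : K) := Wmk X (s *: H) X.
have Ud : forall A, U n A -> U (n+n)%N (Wmk A 0 X).
  by move=> A UA; rewrite Wmk0; apply: dsU.
have UO := (topU n).1; have UO2 := (topU (n+n)%N).1.
have gen : forall s, U (n+n)%N (Wl s) -> forall i,
    tcomp (f _ (Wl s)) i = block_mx (tcomp (f n X) i) 0 0 (tcomp (f n X) i).
  move=> s Us i; rewrite [LHS](BL fF UX UX Us i); congr block_mx.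
  have e := DL fF UO (fD _ _ UX) (differentiable_continuous (fD _ _ Us)) UX Us UO2 Ud.
  rewrite -(tcomp_tmk (fun i => ursubmx (tcomp (f _ (Wl s)) i)) i).
  by rewrite -/(Lur _) e linearZ /= hH scaler0 tcomp0.
have U0 : U (n+n)%N (Wl 0) by rewrite /Wl scale0r; apply: Ud.
have key : forall s, U (n+n)%N (Wl s) -> f _ (Wl s) = f _ (Wl 0).
  by move=> s Us; apply: tuple_ext => i; rewrite !gen.
set Y0 := f _ (Wl 0).
set P := U (n+n)%N `&` (f (n+n)%N @^-1` [set Y0]).
have Pc : compact P.
  apply: fP; first exact: compact_set1.
  by move=> y /= ->; exact: fF.1 _ _ U0.
have Pcl : closed P := compact_closed (@norm_hausdorff _ _) Pc.
pose phi (r : R) := Wl ((r%:C)%C).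
have phiE : phi = (fun t : K => t *: Wmk 0 H 0 + Wmk X 0 X) \o (fun x : R => ((x%:C)%C : K)).
  by apply: funext => r; rewrite /phi /Wl /= Wl_lin.
have phic : continuous phi.
  move=> r; rewrite phiE; apply: continuous_comp; first exact: realC_cont.
  exact: affine_cont.
have ST : [set r | U (n+n)%N (phi r)] = setT.
  apply: connectedR.
  - exists 0; rewrite /= /phi.
    by have -> : ((0:R)%:C)%C = 0 :> K by []; exact: U0.
  - exists (phi @^-1` U (n+n)%N); first exact: open_comp (fun x _ => phic x) UO2.
    by rewrite setTI.
  - exists (phi @^-1` P); first exact: preimage_closed (fun x _ => phic x) Pcl.
    rewrite setTI; apply/funext => r; apply/propext; split.
      move=> Ur; split; [exact: Ur | exact: (key _ Ur)].
    by case.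
have [N hN] := compact_bnd Pc.
have [i [k hk]] : exists i k, H i k != 0.
  have [//|nh] := pselect (exists i k, H i k != 0).
  suff H0 : H = 0 by rewrite H0 eqxx in Hn.
  apply/matrixP => i k; rewrite mxE.
  apply/eqP/negPn/negP => hk; apply: nh; by exists i, k.
case/mxvec_indexP: k hk => a b hk.
set h := H i (mxvec_index a b).
have hr_def : ((complex.Re `|h|)%:C)%C = `|h| := RRe_real (normr_real h).
set hr := complex.Re `|h|.
have hr0 : 0 < hr by rewrite -ltcR hr_def normr_gt0.
set r := N%:R / hr.
have Ur : U (n+n)%N (phi r) by move: (I : setT r); rewrite -ST.
have h2 := hN _ (conj Ur (key _ Ur)).
have h1 := entry_le_norm (phi r) i (mxvec_index (lshift n a) (rshift n b)).
move: h1; rewrite /phi /Wl Wl_entry normrM normC_real -hr_def ger0_norm; last first.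
  by rewrite divr_ge0 // ltW.
rewrite -rmorphM /r divfK ?gt_eqF // => h1.
by have := le_lt_trans h1 h2; rewrite ltxx.
Qed.
End F.


Lemma inj_bij (F : fieldType) m p (L : {linear 'M[F]_(m,p) -> 'M[F]_(m,p)}) :
  injective L -> bijective L.
Proof.
move=> Li; set A := lin_mx L.
have rf : row_free A.
  rewrite -kermx_eq0; apply/eqP/row_matrixP => i; rewrite row0.
  set v := row i (kermx A).
  have hv : v *m A = 0 by rewrite /v -row_mul mulmx_ker row0.
  have : L (vec_mx v) = L 0 by apply: (can_inj (@mxvecK _ _ _)); rewrite -mul_vec_lin vec_mxK hv !linear0.
  move/Li => /(congr1 mxvec); rewrite vec_mxK => ->; exact: linear0.
have uA : A \in unitmx by rewrite -row_free_unit.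
exists (fun w => vec_mx (mxvec w *m invmx A)).
  by move=> x; rewrite -mul_vec_lin mulmxK // mxvecK.
move=> w; apply: (can_inj (@mxvecK _ _ _)).
by rewrite -mul_vec_lin vec_mxK mulmxKV // mxvecK.
Qed.

Unset Implicit Arguments.

Theorem proposition3p4 (R : realType) (g g' : nat)
  (U : forall n, set (mtuple R g n)) (V : forall n, set (mtuple R g' n))
  (f : forall n, mtuple R g n -> mtuple R g' n) :
  nc_domain U -> nc_domain V ->
  analytic_free_map U V f -> proper_free_map U V f ->
  forall (n : nat) (X : mtuple R g n), U n X ->
    injective ('d (f n) X) /\ (g = g' -> bijective ('d (f n) X)).
Proof.
move=> hU hV hf hP n X UX.
have inj : injective ('d (f n) X).
  move=> x y e; apply/eqP; rewrite -subr_eq0; apply/eqP.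
  by apply: (ker_triv hU hV hf hP UX); rewrite linearB e subrr.
split; first exact: inj.
move=> e; subst g'.
exact: inj_bij inj.
Qed.
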